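(* Let $A$ be a subset of a real vector space such that $\mathrm{we}(A)$ is a cone and every element of $\mathrm{we}(A)$ has a unique decomposition in terms of $A$. Then $A$ is a minimal set, and every element of $A$ is an extreme point of $\mathrm{we}(A)$.
   Context: $\mathrm{we}(A)$ is the set of all $\sum_{i=1}^n\alpha_ix_i$ with $n\in\mathbb N$, $\alpha_i\ge0$, $x_i\in A$. A cone is a subset $K$ closed under addition and multiplication by nonnegative scalars with $K\cap(-K)=\{0\}$. An element $x\in\mathrm{we}(A)$ has a unique decomposition in terms of $A$ if for all mutually different $x_1,\dots,x_n\in A$ and all $\alpha_i,\beta_i\ge0$, $x=\sum_i\alpha_ix_i=\sum_i\beta_ix_i$ implies $\alpha_i=\beta_i$ for all $i$. $A$ is minimal if $\mathrm{we}(A\setminus\{x\})\ne\mathrm{we}(A)$ for all $x\in A$. An element $x\in K\setminus\{0\}$ of a cone $K$ is an extreme point if whenever $y,z\in K\setminus\{0\}$ and $x=y+z$, then $y=\alpha x$ and $z=\beta x$ for some $\alpha,\beta>0$. *)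

(* Defs.v *)
From mathcomp Require Import all_boot all_order all_algebra.
From mathcomp Require Import classical_sets reals.
Set Implicit Arguments. Unset Strict Implicit. Unset Printing Implicit Defensive.
Import Order.TTheory GRing.Theory Num.Theory.
Local Open Scope ring_scope.
Local Open Scope classical_set_scope.

Section Defs.
Context {R : realType} {V : lmodType R}.

Definition we (A : set V) : set V :=
  [set x | exists (n : nat) (a : 'I_n -> R) (xs : 'I_n -> V),
     (forall i, 0 <= a i) /\ (forall i, A (xs i)) /\
     x = \sum_(i < n) a i *: xs i].

Definition is_cone (K : set V) : Prop :=
  (forall x y, K x -> K y -> K (x + y)) /\
  (forall (a : R) x, 0 <= a -> K x -> K (a *: x)) /\
  (forall x, K x -> K (- x) -> x = 0).

Definition unique_decomposition (A : set V) (x : V) : Prop :=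
  forall (n : nat) (xs : 'I_n -> V) (a b : 'I_n -> R),
    injective xs -> (forall i, A (xs i)) ->
    (forall i, 0 <= a i) -> (forall i, 0 <= b i) ->
    x = \sum_(i < n) a i *: xs i -> x = \sum_(i < n) b i *: xs i ->
    forall i, a i = b i.

Definition minimal_set (A : set V) : Prop :=
  forall x, A x -> we (A `\` [set x]) <> we A.

Definition extreme_point (K : set V) (x : V) : Prop :=
  K x /\ x <> 0 /\
  forall y z, K y -> y <> 0 -> K z -> z <> 0 -> x = y + z ->
    exists (a b : R), 0 < a /\ 0 < b /\ y = a *: x /\ z = b *: x.

End Defs.

(* Main.v *)
Require Import Defs.
From mathcomp Require Import all_boot all_order all_algebra.
From mathcomp Require Import classical_sets reals.
Import Order.TTheory GRing.Theory Num.Theory.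
Local Open Scope ring_scope.
Local Open Scope classical_set_scope.

Section Helpers.
Context {R : realType} {V : lmodType R}.

Lemma decomp_seq n (a : 'I_n -> R) (xs : 'I_n -> V) (u : seq V) :
  uniq u -> (forall i, xs i \in u) ->
  \sum_(i < n) a i *: xs i =
  \sum_(w <- u) (\sum_(i < n | xs i == w) a i) *: w.
Proof.
move=> uu inu.
transitivity (\sum_(w <- u) \sum_(i < n | xs i == w) a i *: xs i).
  symmetry; under eq_bigr do rewrite big_mkcond.
  rewrite exchange_big /=; apply: eq_bigr => i _.
  rewrite (bigD1_seq (xs i)) //= eqxx big1 ?addr0 //.
  by move=> w /negbTE; rewrite eq_sym => ->.
apply: eq_bigr => w _; rewrite scaler_suml; apply: eq_bigr => i /eqP -> //.
Qed.

Lemma uniq_coef (A : set V) (u : seq V) (c d : V -> R) :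
  (forall x, we A x -> unique_decomposition A x) ->
  uniq u -> (forall w, w \in u -> A w) ->
  (forall w, w \in u -> 0 <= c w) -> (forall w, w \in u -> 0 <= d w) ->
  \sum_(w <- u) c w *: w = \sum_(w <- u) d w *: w ->
  forall w, w \in u -> c w = d w.
Proof.
move=> H uu Au c0 d0 E w wu.
pose xs := fun j : 'I_(size u) => nth 0 u j.
have Hs : forall F : V -> V, \sum_(w <- u) F w = \sum_(j < size u) F (xs j).
  by move=> F; rewrite (big_nth 0) big_mkord.
have inj : injective xs.
  by move=> i j; rewrite /xs => /eqP; rewrite nth_uniq // => /eqP /val_inj.
have Axs : forall j, A (xs j) by move=> j; apply: Au; exact: mem_nth.
rewrite !Hs in E.
have := H (\sum_(j < size u) c (xs j) *: xs j) _ (size u) xs (fun j => c (xs j)) (fun j => d (xs j))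
  inj Axs (fun j => c0 _ (mem_nth _ (ltn_ord j))) (fun j => d0 _ (mem_nth _ (ltn_ord j)))
  erefl E (Ordinal (etrans (index_mem w u) wu)).
rewrite /xs /= nth_index //; apply.
exists (size u), (fun j => c (xs j)), xs; split.
  by move=> j; apply: c0; exact: mem_nth.
by [].
Qed.

End Helpers.

Theorem mainTheorem19 (R : realType) (V : lmodType R) (A : set V) :
  is_cone (we A) ->
  (forall x, we A x -> unique_decomposition A x) ->
  minimal_set A /\ (forall x, A x -> extreme_point (we A) x).
Proof.
move=> _ H.
have weA : forall x, A x -> we A x.
  move=> x Ax; exists 1%N, (fun=> 1), (fun=> x); split=> //; split=> //.
  by rewrite big_ord1 scale1r.
split.
  move=> x Ax Eq.
  have := weA x Ax; rewrite -Eq => -[n [a [ys [a0 [Ays Ex]]]]].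
  pose u := undup (x :: [seq ys i | i <- enum 'I_n]).
  have uu : uniq u by apply: undup_uniq.
  have inu : forall i, ys i \in u.
    by move=> i; rewrite mem_undup inE map_f ?orbT // mem_enum.
  have xu : x \in u by rewrite mem_undup mem_head.
  have Au : forall w, w \in u -> A w.
    move=> w; rewrite mem_undup inE => /orP [/eqP -> //|/mapP [i _ ->]].
    by case: (Ays i).
  have E := @uniq_coef _ _ A _ (fun w => \sum_(i < n | ys i == w) a i)
     (fun w => \sum_(i < 1 | x == w) 1) H uu Au
     (fun w _ => sumr_ge0 _ (fun i _ => a0 i)) (fun w _ => sumr_ge0 _ (fun _ _ => ler01)).
  have {}E := E _ x xu.
  move: E; rewrite [X in _ -> X = _]big_pred0; last first.
    by move=> i; apply: negbTE; apply/eqP => E; case: (Ays i) => _ NE; exact: NE E.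
  rewrite eqxx big_ord1 => E.
  have : (0:R) = 1 by apply: E; rewrite -!decomp_seq // -Ex big_ord1 scale1r.
  by move/eqP; rewrite eq_sym oner_eq0.
move=> x Ax.
have xn0 : x <> 0.
  move=> x0.
  have Au : forall w, w \in [:: x] -> A w by move=> w; rewrite inE => /eqP ->.
  have : (1:R) = 0.
    apply: (@uniq_coef _ _ A [:: x] (fun=> 1) (fun=> 0) H erefl Au _ _ _ x (mem_head _ _)) => //.
    by rewrite !big_seq1 scale1r scale0r.
  by move/eqP; rewrite oner_eq0.
split; first exact: weA.
split=> // y z [n [a [ys [a0 [Ays ->]]]]] yn0 [m [b [zs [b0 [Azs ->]]]]] zn0 Exyz.
pose u := undup (x :: [seq ys i | i <- enum 'I_n] ++ [seq zs i | i <- enum 'I_m]).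
have uu : uniq u by apply: undup_uniq.
have inuy : forall i, ys i \in u.
  by move=> i; rewrite mem_undup inE mem_cat (map_f ys) ?orbT // mem_enum.
have inuz : forall i, zs i \in u.
  by move=> i; rewrite mem_undup inE mem_cat (map_f zs) ?orbT // mem_enum.
have xu : x \in u by rewrite mem_undup mem_head.
have Au : forall w, w \in u -> A w.
  move=> w; rewrite mem_undup inE mem_cat => /orP [/eqP -> //|/orP [/mapP [i _ ->]|/mapP [i _ ->]]] //.
pose ca := fun w => \sum_(i < n | ys i == w) a i.
pose cb := fun w => \sum_(i < m | zs i == w) b i.
have ca0 : forall w, 0 <= ca w by move=> w; apply: sumr_ge0.
have cb0 : forall w, 0 <= cb w by move=> w; apply: sumr_ge0.
have E := @uniq_coef _ _ A _ (fun w => ca w + cb w) (fun w => \sum_(i < 1 | x == w) 1) H uu Au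
  (fun w _ => addr_ge0 (ca0 w) (cb0 w)) (fun w _ => sumr_ge0 _ (fun _ _ => ler01)).
have {}E : forall w, w \in u -> ca w + cb w = \sum_(i < 1 | x == w) 1.
  apply: E.
  under eq_bigr do rewrite scalerDl.
  rewrite big_split /= -!decomp_seq // Exyz.
  by rewrite big_ord1 scale1r.
have Z : forall w, w \in u -> w != x -> ca w = 0 /\ cb w = 0.
  move=> w wu wx; have := E w wu; rewrite big_pred0; last by move=> i; rewrite eq_sym (negbTE wx).
  by move/eqP; rewrite paddr_eq0 // => /andP [/eqP -> /eqP ->].
have Ry : \sum_(i < n) a i *: ys i = ca x *: x.
  rewrite (decomp_seq _ _ _ _ uu inuy) (bigD1_seq x) //= [X in _ + X]big1_seq ?addr0 //.
  by move=> w /andP [wx wu]; have := proj1 (Z w wu wx); rewrite /ca => ->; rewrite scale0r.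
have Rz : \sum_(i < m) b i *: zs i = cb x *: x.
  rewrite (decomp_seq _ _ _ _ uu inuz) (bigD1_seq x) //= [X in _ + X]big1_seq ?addr0 //.
  by move=> w /andP [wx wu]; have := proj2 (Z w wu wx); rewrite /cb => ->; rewrite scale0r.
exists (ca x), (cb x); split; last split; last split => //.
  rewrite lt_def ca0 andbT; apply/eqP => c0; apply: yn0; by rewrite Ry c0 scale0r.
rewrite lt_def cb0 andbT; apply/eqP => c0; apply: zn0; by rewrite Rz c0 scale0r.
Qed.
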